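(* Let $f(X)=N(N-1)\sum_{i=1}^{\ell}\beta_i\,t(H_i,X)$ be a subgraph-counting function. Let $X,Y\in\{0,1\}^n$ differ only in a single index $k$, let $j$ be an index, and let $e_j,e_k$ be the edges (vertex pairs) corresponding to $j,k$. If $e_j$ and $e_k$ share a common vertex, then $$|\partial_jf(X)-\partial_jf(Y)|\le\sum_{i=1}^{\ell}\frac{2|\beta_i|\,|E(H_i)|^2}{\sqrt n}.$$ If $e_j$ and $e_k$ do not share a common vertex, then $$|\partial_jf(X)-\partial_jf(Y)|\le\sum_{i=1}^{\ell}\frac{6|\beta_i|\,|E(H_i)|^2}{n}.$$
   Context: $n=\binom N2$; $X\in\{0,1\}^n$ is identified with a simple graph on $[N]$, coordinates indexed by unordered vertex pairs. For a finite simple graph $H$ on $[m]$, $t(H,X)$ is the number of injective homomorphisms $H\to X$ divided by $N(N-1)\cdots(N-m+1)$. $\partial_jf(X)=\frac12\big(f(X\text{ with coordinate }j\text{ set to }1)-f(X\text{ with coordinate }j\text{ set to }0)\big)$. *)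

(* Defs.v *)
From HB Require Import structures.
From mathcomp Require Import all_boot all_order all_algebra.
Set Implicit Arguments. Unset Strict Implicit. Unset Printing Implicit Defensive.
Import Order.TTheory GRing.Theory Num.Theory.
Local Open Scope ring_scope.

(* Unordered pairs of distinct vertices of [N] (= 'I_N): the n = 'C(N,2)
   coordinates of {0,1}^n. *)
Definition upair (N : nat) := {e : {set 'I_N} | #|e| == 2%N}.
HB.instance Definition _ N := Finite.copy (upair N) {e : {set 'I_N} | #|e| == 2%N}.

(* A simple graph on [N], identified with X in {0,1}^n. *)
Definition graph (N : nat) := {ffun upair N -> bool}.

Definition is_edge N (X : graph N) (s : {set 'I_N}) : bool :=
  [exists e : upair N, (val e == s) && X e].

Definition nedges m (H : graph m) : nat := #|[pred e : upair m | H e]|.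

Definition inj_hom m N (H : graph m) (X : graph N) : nat :=
  #|[pred phi : {ffun 'I_m -> 'I_N} | injectiveb phi &&
     [forall e : upair m, H e ==> is_edge X (phi @: val e)]]|.

Definition tdens (R : fieldType) m N (H : graph m) (X : graph N) : R :=
  (inj_hom H X)%:R / (N ^_ m)%:R.

Definition subgraph_count (R : fieldType) N (l : nat) (m : 'I_l -> nat)
  (H : forall i, graph (m i)) (beta : 'I_l -> R) (X : graph N) : R :=
  (N * N.-1)%:R * \sum_(i < l) beta i * tdens R (H i) X.

Definition setc N (X : graph N) (j : upair N) (b : bool) : graph N :=
  [ffun e => if e == j then b else X e].

Definition dpart (R : fieldType) N (f : graph N -> R) (j : upair N) (X : graph N) : R :=
  (f (setc X j true) - f (setc X j false)) / 2%:R.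

(* Main.v *)
Require Import Defs.
From HB Require Import structures.
From mathcomp Require Import all_boot all_order all_algebra all_fingroup zify ring lra.
Import Order.TTheory GRing.Theory Num.Theory.

Set Implicit Arguments. Unset Strict Implicit. Unset Printing Implicit Defensive.


Section Count.
Variables m N : nat.
Definition cA (cs : seq ('I_m * 'I_N)) : {set {ffun 'I_m -> 'I_N}} :=
  [set phi : {ffun 'I_m -> 'I_N} | injectiveb phi && all (fun p => phi p.1 == p.2) cs].

Lemma cA_nil : #|cA [::]| = N ^_ m.
Proof.
rewrite -[in RHS](card_ord N) -[in RHS](card_ord m) -card_inj_ffuns.
by apply: eq_card => phi; rewrite !inE andbT.
Qed.

Lemma cA_swap v y z cs : y \notin map snd cs -> z \notin map snd cs ->
  #|cA ((v, y) :: cs)| <= #|cA ((v, z) :: cs)|.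
Proof.
move=> yT zT.
pose g (phi : {ffun 'I_m -> 'I_N}) := [ffun i => tperm y z (phi i)].
have ginj : injective g.
  move=> p q /ffunP E; apply/ffunP => i; have := E i; rewrite !ffunE.
  exact: perm_inj.
rewrite -(card_imset _ ginj); apply: subset_leq_card; apply/subsetP => q.
case/imsetP => p; rewrite !inE => /and3P [/injectiveP pinj /eqP pv pcs] ->.
apply/and3P; split.
- apply/injectiveP => a b; rewrite !ffunE => /perm_inj; exact: pinj.
- by rewrite ffunE pv tpermL.
- apply/allP => [[u x]] ux /=; rewrite ffunE.
  have /eqP -> := allP pcs _ ux.
  have xT : x \in map snd cs by apply/mapP; exists (u, x).
  rewrite tpermD //; apply/negP => /eqP E; subst; [by rewrite xT in yT | by rewrite xT in zT].
Qed.

Lemma cA_step v y cs : v \notin map fst cs -> y \notin map snd cs ->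
  #|cA cs| = #|~: [set x in map snd cs]| * #|cA ((v, y) :: cs)|.
Proof.
move=> vS yT.
rewrite -sum1_card (partition_big (fun phi : {ffun 'I_m -> 'I_N} => phi v) predT) //=.
rewrite (bigID (fun z => z \in [set x in map snd cs])) /= big1; last first.
  move=> z zT; apply: big_pred0 => phi; rewrite !inE.
  apply/negP => /andP [/andP [/injectiveP pinj pcs] /eqP pv].
  move: zT; rewrite inE => /mapP [[u x] ux /= xz].
  have := allP pcs _ ux; rewrite /= -xz -pv => /eqP /pinj E.
  by move: vS; rewrite -E (map_f fst ux).
rewrite add0n -sum_nat_const. apply: eq_big => [z|z]; first by rewrite !inE.
rewrite inE => zT.
have -> : \sum_(i in cA cs | i v == z) 1 = #|cA ((v, z) :: cs)|.
  rewrite -sum1_card; apply: eq_bigl => phi; rewrite !inE /=.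
  by case: (injectiveb phi); case: (phi v == z); case: all.
by apply/eqP; rewrite eqn_leq !cA_swap.
Qed.

Lemma cA_bound cs : uniq (map fst cs) -> #|cA cs| * N ^_ (size cs) <= N ^_ m.
Proof.
elim: cs => [|[v y] cs IH] /=; first by rewrite muln1 cA_nil.
case/andP => vS /IH {}IH.
case yT : (y \in map snd cs).
  suff -> : #|cA ((v, y) :: cs)| = 0 by [].
  apply: eq_card0 => phi; rewrite !inE /=; apply/negP.
  case/andP => /injectiveP pinj /andP [/eqP pv pcs].
  move: yT => /mapP [[u x] ux /= xz].
  have := allP pcs _ ux; rewrite /= -xz -pv => /eqP /pinj E.
  by move: vS; rewrite -E (map_f fst ux).
move/negbT: yT => yT.
apply: leq_trans IH.
rewrite (cA_step vS yT) ffactnSr mulnCA [in X in _ <= X]mulnC leq_mul2l; apply/orP; right.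
rewrite [in X in _ <= X]mulnC leq_mul2l; apply/orP; right.
have := cardsC [set x in map snd cs]; rewrite card_ord => E.
have : #|[set x in map snd cs]| <= size cs.
  by rewrite cardsE (leq_trans (card_size _)) // size_map.
move=> h; rewrite leq_subLR -{1}E leq_add2r; exact: h.
Qed.
End Count.


Lemma cardsU_le (T : finType) (A B : {set T}) : #|A :|: B| <= #|A| + #|B|.
Proof. by rewrite -cardsUI leq_addr. Qed.

Lemma pair_of (T : finType) (A : {set T}) z : #|A| == 2 -> z \in A ->
  exists x, x != z /\ A = [set z; x].
Proof.
case/cards2P => p [q [pq ->]]; rewrite !inE => /orP [] /eqP ->.
- by exists q; split; rewrite // eq_sym.
- by exists p; split; rewrite // setUC.
Qed.

Lemma two_vals (T U : finType) (phi : T -> U) p q x1 x2 :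
  injective phi -> p != q -> phi p \in [set x1; x2] -> phi q \in [set x1; x2] ->
  (phi p == x1) && (phi q == x2) || (phi p == x2) && (phi q == x1).
Proof.
move=> inj pq; rewrite !inE => /orP [] /eqP E1 /orP [] /eqP E2.
- by move: pq; rewrite -(inj_eq inj) E1 E2 eqxx.
- by rewrite E1 E2 !eqxx.
- by rewrite E1 E2 !eqxx orbT.
- by move: pq; rewrite -(inj_eq inj) E1 E2 eqxx.
Qed.

Section D.
Variables m N : nat.
Definition D (a : {set 'I_m}) (J : {set 'I_N}) (b : {set 'I_m}) (K : {set 'I_N}) :=
  [set phi : {ffun 'I_m -> 'I_N} | [&& injectiveb phi, phi @: a == J & phi @: b == K]].

Lemma D_shared (a b : {set 'I_m}) (J K : {set 'I_N}) : #|J| == 2 -> #|K| == 2 -> J != K -> J :&: K != set0 ->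
  #|D a J b K| * N ^_ 3 <= N ^_ m.
Proof.
move=> J2 K2 JK JK0.
case: (set_0Vmem (D a J b K)) => [-> | [phi0 Hphi0]]; first by rewrite cards0.
case: (set_0Vmem (J :&: K)) => [E | [z]]; first by rewrite E eqxx in JK0.
rewrite inE => /andP [zJ zK].
have [x [xz EJ]] := pair_of J2 zJ.
have [y [yz EK]] := pair_of K2 zK.
have xy : x != y by apply: contraNneq JK => exy; rewrite EJ EK exy.
move: Hphi0; rewrite inE => /and3P [/injectiveP inj0 /eqP Ea /eqP Eb].
have : z \in phi0 @: a by rewrite Ea.
case/imsetP => w wa zw.
have : x \in phi0 @: a by rewrite Ea EJ !inE eqxx orbT.
case/imsetP => u ua xu.
have : y \in phi0 @: b by rewrite Eb EK !inE eqxx orbT.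
case/imsetP => v vb yv.
have : z \in phi0 @: b by rewrite Eb.
case/imsetP => w' w'b zw'.
have ww' : w' = w by apply: inj0; rewrite -zw -zw'.
subst w'.
have uw : u != w by rewrite -(inj_eq inj0) -xu -zw.
have vw : v != w by rewrite -(inj_eq inj0) -yv -zw.
have uv : u != v by rewrite -(inj_eq inj0) -xu -yv.
apply: leq_trans (cA_bound (cs := [:: (w, z); (u, x); (v, y)]) _); last first.
  by rewrite /= !inE negb_or [w == u]eq_sym [w == v]eq_sym uw vw uv.
rewrite leq_mul2r; apply/orP; right; apply: subset_leq_card; apply/subsetP => phi.
rewrite !inE => /and3P [/injectiveP inj /eqP Fa /eqP Fb].
have phwJ : phi w \in J by rewrite -Fa imset_f.
have phwK : phi w \in K by rewrite -Fb imset_f.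
have phuJ : phi u \in J by rewrite -Fa imset_f.
have phvK : phi v \in K by rewrite -Fb imset_f.
have pwz : phi w = z.
  move: phwJ phwK; rewrite EJ EK !inE => /orP [] /eqP -> //= /orP [] /eqP //.
  by move=> E; rewrite E eqxx in xy.
apply/andP; split; first by apply/injectiveP.
rewrite /= pwz eqxx /=.
move: phuJ phvK; rewrite EJ EK !inE => /orP [/eqP E|->] /orP [/eqP E'|->] //.
- by move: uw; rewrite -(inj_eq inj) E pwz eqxx.
- by move: uw; rewrite -(inj_eq inj) E pwz eqxx.
- by move: vw; rewrite -(inj_eq inj) E' pwz eqxx.
Qed.

Lemma D_disj (a b : {set 'I_m}) (J K : {set 'I_N}) : #|J| == 2 -> #|K| == 2 -> J :&: K = set0 ->
  #|D a J b K| * N ^_ 4 <= 4 * N ^_ m.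
Proof.
move=> J2 K2 JK0.
case: (set_0Vmem (D a J b K)) => [-> | [phi0 Hphi0]]; first by rewrite cards0.
move: (J2) (K2) => /cards2P [x1 [x2 [x12 EJ]]] /cards2P [y1 [y2 [y12 EK]]].
have nJK p : p \in J -> p \in K -> False.
  move=> pJ pK; suff : p \in J :&: K by rewrite JK0 inE.
  by rewrite inE pJ pK.
have x1J : x1 \in J by rewrite EJ !inE eqxx.
have x2J : x2 \in J by rewrite EJ !inE eqxx orbT.
have y1K : y1 \in K by rewrite EK !inE eqxx.
have y2K : y2 \in K by rewrite EK !inE eqxx orbT.
have dxy p q : p \in J -> q \in K -> p != q.
  by move=> pJ qK; apply/eqP => E; subst; exact: nJK pJ qK.
move: Hphi0; rewrite inE => /and3P [/injectiveP inj0 /eqP Ea /eqP Eb].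
have : x1 \in phi0 @: a by rewrite Ea.
case/imsetP => a1 a1a E1.
have : x2 \in phi0 @: a by rewrite Ea.
case/imsetP => a2 a2a E2.
have : y1 \in phi0 @: b by rewrite Eb.
case/imsetP => b1 b1b E3.
have : y2 \in phi0 @: b by rewrite Eb.
case/imsetP => b2 b2b E4.
have ne p q : phi0 p != phi0 q -> p != q by apply: contraNneq => ->.
have U : uniq [:: a1; a2; b1; b2].
  have a12 : a1 != a2 by rewrite ne // -E1 -E2.
  have b12 : b1 != b2 by rewrite ne // -E3 -E4.
  rewrite /= !inE !negb_or a12 b12 !ne // -?E1 -?E2 -?E3 -?E4 // dxy //.
have B (p1 p2 q1 q2 : 'I_N) : #|cA [:: (a1, p1); (a2, p2); (b1, q1); (b2, q2)]| * N ^_ 4 <= N ^_ m.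
  exact: (@cA_bound m N [:: (a1, p1); (a2, p2); (b1, q1); (b2, q2)] U).
have S : D a J b K \subset
   (cA [:: (a1, x1); (a2, x2); (b1, y1); (b2, y2)] :|: cA [:: (a1, x1); (a2, x2); (b1, y2); (b2, y1)])
   :|: (cA [:: (a1, x2); (a2, x1); (b1, y1); (b2, y2)] :|: cA [:: (a1, x2); (a2, x1); (b1, y2); (b2, y1)]).
  apply/subsetP => phi; rewrite !inE => /and3P [/injectiveP inj /eqP Fa /eqP Fb].
  have a12 : a1 != a2 by rewrite ne // -E1 -E2.
  have b12 : b1 != b2 by rewrite ne // -E3 -E4.
  have := two_vals inj a12 (_ : phi a1 \in [set x1; x2]) (_ : phi a2 \in [set x1; x2]).
  rewrite -EJ -Fa !imset_f // => /(_ isT isT) HA.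
  have := two_vals inj b12 (_ : phi b1 \in [set y1; y2]) (_ : phi b2 \in [set y1; y2]).
  rewrite -EK -Fb !imset_f // => /(_ isT isT) HB.
  have -> : injectiveb phi by apply/injectiveP.
  rewrite /=; move: HA HB.
  by case: (phi a1 == x1); case: (phi a2 == x2); case: (phi a1 == x2); case: (phi a2 == x1);
     case: (phi b1 == y1); case: (phi b2 == y2); case: (phi b1 == y2); case: (phi b2 == y1).
have := subset_leq_card S => S'.
have := leq_trans S' (leq_trans (cardsU_le _ _) (leq_add (cardsU_le _ _) (cardsU_le _ _))) => S2.
apply: leq_trans (leq_mul S2 (leqnn (N ^_ 4))) _.
rewrite !mulnDl.
have := B x1 x2 y1 y2; have := B x1 x2 y2 y1; have := B x2 x1 y1 y2; have := B x2 x1 y2 y1.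
move=> h1 h2 h3 h4.
have -> : 4 * N ^_ m = N ^_ m + N ^_ m + (N ^_ m + N ^_ m) by lia.
by apply: leq_add; apply: leq_add.
Qed.
End D.

Local Open Scope ring_scope.

Lemma is_edge_setc N (Z : graph N) j b s : s != val j -> is_edge (setc Z j b) s = is_edge Z s.
Proof.
move=> sj; apply: eq_existsb => e; rewrite ffunE.
case: (e =P j) => [->|//]; by rewrite eq_sym (negbTE sj).
Qed.

Lemma is_edge_setc_j N (Z : graph N) j : is_edge (setc Z j false) (val j) = false.
Proof.
apply/existsP => [[e /andP [/eqP E]]]; rewrite ffunE.
by rewrite (val_inj E) eqxx.
Qed.

Lemma is_edge_agree N (Z Z' : graph N) k s : (forall e, e != k -> Z e = Z' e) ->
  s != val k -> is_edge Z s = is_edge Z' s.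
Proof.
move=> A sk; apply: eq_existsb => e; case: (e =P k) => [->|/eqP ek].
  by rewrite eq_sym (negbTE sk).
by rewrite A.
Qed.

Lemma card_sumR (R : pzSemiRingType) (T : finType) (P : pred T) :
  (#|P|%:R : R) = \sum_t (P t)%:R.
Proof.
rewrite -sum1_card natr_sum big_mkcond /=; apply: eq_bigr => t _.
by have -> : (t \in P) = P t by []; case: (P t).
Qed.

Lemma card_sumR_set (R : pzSemiRingType) (T : finType) (A : {set T}) :
  (#|A|%:R : R) = \sum_t (t \in A)%:R.
Proof.
rewrite -sum1_card natr_sum big_mkcond /=; apply: eq_bigr => t _.
by case: (t \in A).
Qed.

Section Delta.
Variables (R : realDomainType) (m N : nat) (H : graph m) (X Y : graph N) (j k : upair N).
Hypothesis XY : forall e, e != k -> X e = Y e.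

Definition okg (Z : graph N) (phi : {ffun 'I_m -> 'I_N}) :=
  [forall e, H e ==> is_edge Z (phi @: val e)].
Definition hits (phi : {ffun 'I_m -> 'I_N}) (j : upair N) :=
  [exists a, H a && (phi @: val a == val j)].
Definition Cset := [set phi : {ffun 'I_m -> 'I_N} | [&& injectiveb phi, hits phi j & hits phi k]].

Lemma okg_eq Z Z' (phi : {ffun 'I_m -> 'I_N}) : (forall e, H e -> is_edge Z (phi @: val e) = is_edge Z' (phi @: val e)) ->
  okg Z phi = okg Z' phi.
Proof. by move=> A; apply: eq_forallb => e; case He: (H e) => //=; rewrite A. Qed.

Lemma nohits (phi : {ffun 'I_m -> 'I_N}) i e : ~~ hits phi i -> H e -> phi @: val e != val i.
Proof. by move=> /existsPn /(_ e); rewrite negb_and => /orP [/negP|]. Qed.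

Lemma delta_bound :
  `| (inj_hom H (setc X j true))%:R - (inj_hom H (setc X j false))%:R
     - ((inj_hom H (setc Y j true))%:R - (inj_hom H (setc Y j false))%:R) : R|
  <= (#|Cset|)%:R.
Proof.
rewrite /inj_hom card_sumR_set !card_sumR -!sumrB.
apply: le_trans (ler_norm_sum _ _ _) _.
apply: ler_sum => phi _ /=.
rewrite inE.
have E Z : [forall e, H e ==> is_edge Z (phi @: val e)] = okg Z phi by [].
rewrite !E.
case: (injectiveb phi) => /=; last by rewrite !subrr normr0.
case hj : (hits phi j); last first.
  have A Z b : okg (setc Z j b) phi = okg Z phi.
    by apply: okg_eq => e He; rewrite is_edge_setc // nohits // hj.
  by rewrite !A !subrr normr0.
case hk : (hits phi k); last first.
  have A b : okg (setc X j b) phi = okg (setc Y j b) phi.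
    apply: okg_eq => e He; apply: (@is_edge_agree _ _ _ k); last by apply: nohits => //; rewrite hk.
    by move=> e' e'k; rewrite !ffunE XY.
  by rewrite !A !subrr normr0.
have E0 : forall Z, okg (setc Z j false) phi = false.
  move=> Z; case/existsP: hj => a /andP [Ha /eqP Ea].
  by apply/negP => /forallP /(_ a); rewrite Ha Ea is_edge_setc_j.
rewrite !E0 !subr0 /=.
by case: (okg (setc X j true) phi); case: (okg (setc Y j true) phi);
  rewrite ?subrr ?normr0 ?subr0 ?normr1 ?sub0r ?normrN ?normr1.
Qed.
End Delta.

Local Close Scope ring_scope.

Lemma le_sum1 (I : finType) (P : pred I) (F : I -> nat) i : P i -> F i <= \sum_(i | P i) F i.
Proof. by move=> Pi; rewrite (bigD1 i) //= leq_addr. Qed.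

Lemma card_sum_nat (T : finType) (A : {set T}) : #|A| = \sum_t (t \in A : nat).
Proof. by rewrite -sum1_card big_mkcond /=; apply: eq_bigr => t _; case: (t \in A). Qed.

Section Count2.
Variables (m N : nat) (H : graph m) (j k : upair N).

Lemma C_sum : #|Cset H j k| <=
  \sum_(a | H a) \sum_(b | H b) #|D (val a) (val j) (val b) (val k)|.
Proof.
rewrite -sum1_card.
apply: (@leq_trans (\sum_(phi in Cset H j k) \sum_(a | H a) \sum_(b | H b)
    (phi \in D (val a) (val j) (val b) (val k) : nat))).
  apply: leq_sum => phi; rewrite inE => /and3P [pinj /existsP [a /andP [Ha Ea]] /existsP [b /andP [Hb Eb]]].
  apply: leq_trans (le_sum1 _ Ha); apply: leq_trans (le_sum1 _ Hb).
  by rewrite inE pinj Ea Eb.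
apply: (@leq_trans (\sum_phi \sum_(a | H a) \sum_(b | H b)
    (phi \in D (val a) (val j) (val b) (val k) : nat))).
  by rewrite [X in _ <= X](bigID (fun phi => phi \in Cset H j k)) /= leq_addr.
rewrite exchange_big /=; apply: leq_sum => a Ha.
rewrite exchange_big /=; apply: leq_sum => b Hb.
by rewrite card_sum_nat.
Qed.

Lemma sum_const_H (c : nat) : \sum_(a | H a) c = nedges H * c.
Proof. by rewrite -sum_nat_const; apply: eq_bigl. Qed.

Lemma C_shared : #|val j| == 2 -> #|val k| == 2 -> j != k -> val j :&: val k != set0 ->
  #|Cset H j k| * N ^_ 3 <= (nedges H) ^ 2 * N ^_ m.
Proof.
move=> J2 K2 jk JK.
apply: leq_trans (leq_mul C_sum (leqnn _)) _.
rewrite big_distrl /= -mulnA -sum_const_H.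
apply: leq_sum => a Ha; rewrite big_distrl /= -sum_const_H.
apply: leq_sum => b Hb; apply: D_shared => //; by apply: contra jk => /eqP E; apply/eqP/val_inj.
Qed.

Lemma C_disj : #|val j| == 2 -> #|val k| == 2 -> val j :&: val k = set0 ->
  #|Cset H j k| * N ^_ 4 <= 4 * (nedges H) ^ 2 * N ^_ m.
Proof.
move=> J2 K2 JK.
apply: leq_trans (leq_mul C_sum (leqnn _)) _.
rewrite big_distrl /= (_ : 4 * nedges H ^ 2 * N ^_ m = nedges H * (nedges H * (4 * N ^_ m))); last by rewrite expnS expn1; lia.
rewrite -sum_const_H.
apply: leq_sum => a Ha; rewrite big_distrl /= -sum_const_H.
apply: leq_sum => b Hb; apply: D_disj => //.
Qed.
End Count2.

Local Open Scope ring_scope.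

Lemma ffact3 N : (N ^_ 3 = N * N.-1 * (N - 2))%N.
Proof. by rewrite !ffactnSr ffactn0 mul1n subn0 subn1. Qed.
Lemma ffact4 N : (N ^_ 4 = N * N.-1 * (N - 2) * (N - 3))%N.
Proof. by rewrite ffactnSr ffact3. Qed.
Lemma bin2' N : ('C(N, 2) * 2 = N * N.-1)%N.
Proof. by have := bin_ffact N 2; rewrite ffactnSr ffactnSr ffactn0 mul1n subn0 subn1. Qed.

Lemma fin_shared (R : rcfType) (N Fm E Cn : nat) (beta Delta : R) :
  (3 <= N)%N -> `|Delta| <= Cn%:R -> (Cn * N ^_ 3 <= E ^ 2 * Fm)%N ->
  (N * N.-1)%:R / 2%:R * `|beta * Delta / Fm%:R| <=
    2%:R * `|beta| * (E ^ 2)%:R / Num.sqrt ('C(N, 2))%:R.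
Proof.
move=> N3 hD hC.
have s0 : 0 < Num.sqrt ('C(N, 2))%:R :> R.
  by rewrite sqrtr_gt0 ltr0n bin_gt0; lia.
case: (posnP Fm) => [->|Fm0].
  rewrite invr0 mulr0 normr0 mulr0; apply: divr_ge0 => //; last exact: ltW.
  by apply: mulr_ge0 => //; apply: mulr_ge0.
set s := Num.sqrt _ in s0 *.
set c := (N * N.-1)%:R : R.
set r := (N - 2)%:R : R.
set e := (E ^ 2)%:R : R.
set a := `|beta|.
set f := Fm%:R : R.
have f0 : 0 < f by rewrite ltr0n.
set q := `|Delta| / f.
have hq : c * r * q <= e.
  rewrite /q mulrA ler_pdivrMr //.
  apply: le_trans (_ : c * r * Cn%:R <= _).
    by apply: ler_wpM2l => //; apply: mulr_ge0; rewrite ler0n.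
  by rewrite /c /r /e /f -!natrM ler_nat -ffact3 mulnC.
have sr : s <= 4%:R * r.
  rewrite /s -(@ger0_norm _ (4%:R * r)) ?mulr_ge0 ?ler0n // -sqrtr_sqr ler_sqrt.
    rewrite /r -natrM -natrX ler_nat.
    have := bin2' N; nia.
  by rewrite exprn_ge0 // mulr_ge0 ?ler0n.
rewrite -[beta * Delta / f]mulrA normrM normf_div (ger0_norm (ltW f0)) -/a -/q.
rewrite ler_pdivlMr //.
have c0 : 0 <= c by rewrite ler0n.
have a0 : 0 <= a by rewrite /a normr_ge0.
have q0 : 0 <= q by rewrite divr_ge0 // ltW.
have r0 : 0 <= r by rewrite ler0n.
have h1 : c * a * q * s <= c * a * q * (4%:R * r).
  by apply: ler_wpM2l => //; rewrite mulr_ge0 // mulr_ge0.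
have h2 : a * (c * r * q) <= a * e by apply: ler_wpM2l.
nra.
Qed.

Lemma fin_disj (R : rcfType) (N Fm E Cn : nat) (beta Delta : R) :
  (4 <= N)%N -> `|Delta| <= Cn%:R -> (Cn * N ^_ 4 <= 4 * E ^ 2 * Fm)%N ->
  (N * N.-1)%:R / 2%:R * `|beta * Delta / Fm%:R| <=
    6%:R * `|beta| * (E ^ 2)%:R / ('C(N, 2))%:R.
Proof.
move=> N4 hD hC.
have n0 : 0 < ('C(N, 2))%:R :> R by rewrite ltr0n bin_gt0; lia.
case: (posnP Fm) => [->|Fm0].
  rewrite invr0 mulr0 normr0 mulr0; apply: divr_ge0 => //.
  by apply: mulr_ge0 => //; apply: mulr_ge0.
set n := ('C(N, 2))%:R in n0 *.
set c := (N * N.-1)%:R : R.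
set r := (N - 2)%:R : R.
set r3 := (N - 3)%:R : R.
set e := (E ^ 2)%:R : R.
set a := `|beta|.
set f := Fm%:R : R.
have f0 : 0 < f by rewrite ltr0n.
set q := `|Delta| / f.
have hq : c * r * r3 * q <= 4%:R * e.
  rewrite /q mulrA ler_pdivrMr //.
  apply: le_trans (_ : c * r * r3 * Cn%:R <= _).
    by apply: ler_wpM2l => //; rewrite mulr_ge0 ?ler0n // mulr_ge0 ?ler0n.
  by rewrite /c /r /r3 /e /f -!natrM ler_nat -ffact4 mulnC.
have nc : n * 2%:R = c by rewrite /n /c -natrM bin2'.
have cr : c <= 6%:R * (r * r3).
  rewrite /c /r /r3 -!natrM ler_nat; nia.
rewrite -[beta * Delta / f]mulrA normrM normf_div (ger0_norm (ltW f0)) -/a -/q.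
rewrite ler_pdivlMr //.
have c0 : 0 <= c by rewrite ler0n.
have a0 : 0 <= a by rewrite /a normr_ge0.
have q0 : 0 <= q by rewrite divr_ge0 // ltW.
have r0 : 0 <= r by rewrite ler0n.
have r30 : 0 <= r3 by rewrite ler0n.
have h1 : a * q * c * c <= a * q * c * (6%:R * (r * r3)).
  by apply: ler_wpM2l => //; rewrite mulr_ge0 // mulr_ge0.
have h2 : a * (c * r * r3 * q) <= a * (4%:R * e) by apply: ler_wpM2l.
rewrite -nc in h1 h2 *.
nra.
Qed.

Unset Implicit Arguments. Set Strict Implicit. Set Printing Implicit Defensive.


Theorem lemma27 (R : rcfType) (N l : nat) (m : 'I_l -> nat)
  (H : forall i, graph (m i)) (beta : 'I_l -> R)
  (X Y : graph N) (j k : upair N) :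
  (forall e, e != k -> X e = Y e) -> X k != Y k ->
  let f := subgraph_count H beta in
  let n := 'C(N, 2) in
  (val j :&: val k != set0 ->
     `|dpart f j X - dpart f j Y| <=
       \sum_(i < l) 2%:R * `|beta i| * ((nedges (H i)) ^ 2)%:R / Num.sqrt n%:R)
  /\
  (val j :&: val k = set0 ->
     `|dpart f j X - dpart f j Y| <=
       \sum_(i < l) 6%:R * `|beta i| * ((nedges (H i)) ^ 2)%:R / n%:R).
Proof.
move=> XY _ f n.
case: (eqVneq j k) => [ejk | jk].
  have E b : setc X j b = setc Y j b.
    apply/ffunP => e; rewrite !ffunE; case: (e =P j) => // /eqP ej.
    by apply: XY; rewrite -ejk.
  have -> : dpart f j X = dpart f j Y by rewrite /dpart !E.
  rewrite subrr normr0; split => _; apply: sumr_ge0 => i _.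
    by apply: divr_ge0; rewrite ?sqrtr_ge0 // !mulr_ge0 ?ler0n.
  by apply: divr_ge0; rewrite ?ler0n // !mulr_ge0 ?ler0n.
set c := (N * N.-1)%:R : R.
have key : dpart f j X - dpart f j Y = c / 2%:R * \sum_(i < l)
   (beta i * ((inj_hom (H i) (setc X j true))%:R - (inj_hom (H i) (setc X j false))%:R
     - ((inj_hom (H i) (setc Y j true))%:R - (inj_hom (H i) (setc Y j false))%:R)) / (N ^_ (m i))%:R).
  have E (A B C D : R) : (c * A - c * B) / 2%:R - (c * C - c * D) / 2%:R = c / 2%:R * ((A - B) - (C - D)).
    by ring.
  rewrite /dpart /f /subgraph_count -/c E -!sumrB; congr (_ * _); apply: eq_bigr => i _.
  by rewrite /tdens; ring.
have c0 : 0 <= c / 2%:R by rewrite divr_ge0 ?ler0n.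
have J2 := valP j; have K2 := valP k.
split => hJK; rewrite key normrM (ger0_norm c0);
  apply: le_trans (ler_wpM2l c0 (ler_norm_sum _ _ _)) _; rewrite mulr_sumr;
  apply: ler_sum => i _.
- apply: (fin_shared (Cn := #|Cset (H i) j k|)).
  + have := cardsUI (val j) (val k); rewrite (eqP J2) (eqP K2) => U.
    have I1 : (#|val j :&: val k| <= 1)%N.
      rewrite leqNgt; apply/negP => I2.
      have Ij : val j :&: val k = val j.
        by apply/eqP; rewrite eqEcard subsetIl (eqP J2) I2.
      have Ik : val j :&: val k = val k.
        by apply/eqP; rewrite eqEcard subsetIr (eqP K2) I2.
      have ejk : j = k by apply: val_inj; exact: (etrans (esym Ij) Ik).
      by rewrite ejk eqxx in jk.
    have := max_card (mem (val j :|: val k)); rewrite card_ord.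
    have -> : #|mem (val j :|: val k)| = #|val j :|: val k| by [].
    lia.
  + exact: delta_bound.
  + exact: C_shared.
- apply: (fin_disj (Cn := #|Cset (H i) j k|)).
  + have := cardsUI (val j) (val k); rewrite (eqP J2) (eqP K2) hJK cards0 addn0 => U.
    have := max_card (mem (val j :|: val k)); rewrite card_ord.
    have -> : #|mem (val j :|: val k)| = #|val j :|: val k| by [].
    lia.
  + exact: delta_bound.
  + exact: C_disj.
Qed.
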